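(* Let $p$ be a prime, $m\ge1$, $n\ge1$ and $0\le k<n$ integers. The number of $[[n,k]]_{p^m}$ stabilizer codes is $$N(n,k,p^m)=\left(p^{m-1}\right)^{\frac{(n-k)(n+3k+1)}{2}}\begin{bmatrix} n\\ n-k\end{bmatrix}_p\prod_{j=0}^{n-k-1}\left(p^{n-j}+1\right),\qquad \begin{bmatrix} n\\ n-k\end{bmatrix}_p:=\prod_{j=0}^{n-k-1}\frac{p^{n-j}-1}{p^{n-k-j}-1}.$$
   Context: Qudits have dimension $d=p^m$ with configuration space $\mathbb{Z}_{p^m}$ (integers modulo $p^m$, not the Galois field). $\Lambda=\begin{pmatrix}0&I_n\\-I_n&0\end{pmatrix}$. On $\mathbb{C}^d$ with basis $\{|j\rangle\}_{j\in\mathbb{Z}_d}$, $X|j\rangle=|j+1\rangle$, $Z|j\rangle=\omega^j|j\rangle$, $\omega=e^{2\pi i/d}$; the $n$-qudit Pauli group is generated by the $X_j,Z_j$ (and $e^{\pi i/d}I$ if $d$ is even); every Pauli is a phase times $g(a)=X^{u_1}Z^{v_1}\otimes\cdots\otimes X^{u_n}Z^{v_n}$, $a=(u,v)\in\mathbb{Z}_d^{2n}$, and $g(a),g(b)$ commute iff $a^T\Lambda b=0$. An $[[n,k]]_d$ stabilizer group is $S=\langle g_1,\dots,g_{n-k}\rangle$ of pairwise commuting Paulis each having eigenvalue $+1$, with $|S|=d^{n-k}$; its check matrix is $H=[a_1|\cdots|a_{n-k}]$ where $g_j$ is a phase times $g(a_j)$ (the $a_j$ are linearly independent over $\mathbb{Z}_d$,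 i.e. $\sum x_ja_j=0\Rightarrow$ all $x_j=0$). Two stabilizer groups define the same $[[n,k]]_d$ stabilizer code iff their check matrices satisfy $H'=HA$ with $A\in\mathrm{GL}(n-k,\mathbb{Z}_d)$; equivalently a code is the subgroup of $\mathbb{Z}_d^{2n}$ spanned by $n-k$ linearly independent, pairwise symplectically orthogonal ($a_i^T\Lambda a_j=0$) vectors. *)

(* Defs.v *)
From HB Require Import structures.
From mathcomp Require Import all_boot all_order all_algebra.
Set Implicit Arguments. Unset Strict Implicit. Unset Printing Implicit Defensive.
Import GRing.Theory.
Local Open Scope ring_scope.

(* Vectors a = (u, v) in Z_d^{2n}, stored as row vectors of length n + n:
   the first n coordinates are u, the last n are v. *)
Definition pvec (d n : nat) := 'rV['Z_d]_(n + n).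

(* Symplectic form a^T Lambda b = u_a . v_b - v_a . u_b,
   with Lambda = [[0, I_n], [-I_n, 0]]. *)
Definition symp (d n : nat) (a b : pvec d n) : 'Z_d :=
  (lsubmx a *m (rsubmx b)^T - rsubmx a *m (lsubmx b)^T) 0 0.

Definition lin_indep (d n r : nat) (a : 'I_r -> pvec d n) : bool :=
  [forall x : {ffun 'I_r -> 'Z_d},
     (\sum_(j < r) x j *: a j == 0) ==> [forall j, x j == 0]].

Definition pairwise_symp_orth (d n r : nat) (a : 'I_r -> pvec d n) : bool :=
  [forall i, forall j, symp (a i) (a j) == 0].

Definition zspan (d n r : nat) (a : 'I_r -> pvec d n) : {set pvec d n} :=
  [set v | [exists x : {ffun 'I_r -> 'Z_d}, v == \sum_(j < r) x j *: a j]].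

Definition is_stab_code (d n k : nat) (C : {set pvec d n}) : bool :=
  [exists a : {ffun 'I_(n - k) -> pvec d n},
    [&& lin_indep a, pairwise_symp_orth a & C == zspan a]].

Definition stab_codes (d n k : nat) : {set {set pvec d n}} :=
  [set C | is_stab_code k C ].

(* Main.v *)
Require Import Defs.
From HB Require Import structures.
From mathcomp Require Import all_boot all_order all_algebra.
From mathcomp Require Import zify ring lra.
Set Implicit Arguments. Unset Strict Implicit. Unset Printing Implicit Defensive.
Import GRing.Theory Num.Theory.
Lemma step_arith p m N i j w wp b g : (1 < p)%N -> (0 < m)%N -> (0 < w)%N ->
  (w * (p ^ m) ^ j = (p ^ m) ^ N)%N -> (w * p ^ j = p ^ N * wp)%N ->
  ((p ^ m) ^ i * wp = (p ^ (m - 1)) ^ i * b)%N -> (g + b = w)%N ->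
  g = (p ^ (m * (N - j)) - p ^ ((m - 1) * (N - j) + i))%N.
Proof.
move=> p1 m0 w0 E1 E2 E3 E4.
have p0 : (0 < p)%N by apply: ltnW.
have pos : forall e, (0 < p ^ e)%N by move=> e; rewrite expn_gt0 p0.
have canc : forall a b e, (a * p ^ e = b * p ^ e -> a = b)%N.
  by move=> a b' e /eqP; rewrite eqn_pmul2r ?pos // => /eqP.
rewrite -!expnM in E1 E3.
have jN : (j <= N)%N.
  have : (p ^ (m * j) <= p ^ (m * N))%N by rewrite -E1 leq_pmull.
  by rewrite leq_exp2l // leq_pmul2l.
have Ew : w = p ^ (m * (N - j)).
  apply: (canc _ _ (m * j)); rewrite E1 -expnD; congr (_ ^ _)%N.
  by rewrite -mulnDr subnK.
have Ewp : wp = p ^ ((m - 1) * (N - j)).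
  apply: (canc _ _ N); rewrite mulnC -E2 Ew -!expnD; congr (_ ^ _)%N.
  case: m m0 {E1 E3 Ew} => // m' _; rewrite subn1 /=; nia.
have Eb : b = p ^ ((m - 1) * (N - j) + i).
  apply: (canc _ _ ((m - 1) * i)); rewrite mulnC -E3 Ewp -!expnD; congr (_ ^ _)%N.
  case: m m0 {E1 E3 Ew Ewp} => // m' _; rewrite subn1 /=; nia.
by rewrite -Ew -Eb -E4 addnK.
Qed.

Local Open Scope ring_scope.

Lemma master (A B : finZmodType) (f : A -> B) (D : {set A}) :
  (forall x y, f (x - y) = f x - f y) -> 0 \in D ->
  (forall x y, x \in D -> y \in D -> x - y \in D) ->
  #|D| = (#|[set x in D | f x == 0%R]| * #|f @: D|)%N.
Proof.
move=> fB D0 DB.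
have f0 : f 0 = 0 by rewrite -(subrr 0) fB subrr.
have DN : forall x, x \in D -> - x \in D by move=> x Dx; rewrite -sub0r DB.
have DD : forall x y, x \in D -> y \in D -> x + y \in D.
  by move=> x y Dx Dy; rewrite -[y]opprK DB ?DN.
rewrite -sum1_card (partition_big_imset f) /= mulnC -sum_nat_const.
apply: eq_bigr => b /imsetP [x0 Dx0 ->].
rewrite sum1dep_card.
have -> : [set x | (x \in D) && (f x == f x0)] = (fun y => x0 + y) @: [set x in D | f x == 0].
  apply/setP => x; rewrite inE; apply/andP/imsetP.
    move=> [Dx /eqP fx]; exists (x - x0); last by rewrite addrC subrK.
    by rewrite inE DB //= fB fx subrr.
  move=> [y]; rewrite inE => /andP [Dy /eqP fy] ->; split; first exact: DD.
  have fN : forall z, f (- z) = - f z by move=> z; rewrite -sub0r fB f0 sub0r.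
  by rewrite -[y]opprK fB fN opprK fy addr0.
by rewrite card_imset //; apply: addrI.
Qed.

Section Zd.
Variables (p m : nat).
Hypotheses (pP : prime p) (m0 : (0 < m)%N).
Local Notation d := (p ^ m)%N.
Local Notation Z := 'Z_(p ^ m).

Lemma p_gt1 : (1 < p)%N. Proof. exact: prime_gt1. Qed.
Lemma p_gt0 : (0 < p)%N. Proof. exact: prime_gt0. Qed.
Lemma d_gt1 : (1 < d)%N.
Proof. by have := ltn_exp2l 0 m p_gt1; rewrite expn0 m0. Qed.
Lemma d_split : d = (p ^ (m - 1) * p)%N.
Proof. by rewrite -expnSr subn1 prednK. Qed.

Lemma natZ0 (x : nat) : ((x%:R : Z) == 0) = (d %| x)%N.
Proof.
apply/eqP/idP => [H|H].
  by have := congr1 val H; rewrite /= (val_Zp_nat d_gt1) => /eqP; rewrite /dvdn.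
by apply: val_inj; rewrite /= (val_Zp_nat d_gt1); apply/eqP.
Qed.

Lemma ZE (c : Z) : c = (val c)%:R.
Proof. by rewrite natr_Zp. Qed.
Lemma Zlt (c : Z) : (val c < d)%N.
Proof. have := ltn_ord c; by rewrite [X in (_ < X)%N -> _]Zp_cast // d_gt1. Qed.
Lemma cardZ : #|{: Z}| = d.
Proof. by rewrite card_ord Zp_cast // d_gt1. Qed.

Definition hh : Z := (p ^ (m - 1))%:R.
Definition pz : Z := p%:R.

Lemma hh_neq0 : hh != 0.
Proof.
rewrite /hh natZ0; apply/negP => /dvdn_leq; rewrite expn_gt0 p_gt0 => /(_ isT).
by rewrite leq_exp2l ?p_gt1 // leqNgt ltn_subrL m0.
Qed.

Lemma hhpz : hh * pz = 0.
Proof. by rewrite /hh /pz -natrM -d_split; apply/eqP; rewrite natZ0. Qed.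

Lemma dvd_hh x : (d %| p ^ (m - 1) * x)%N = (p %| x)%N.
Proof. by rewrite d_split dvdn_pmul2l // expn_gt0 p_gt0. Qed.
Lemma dvd_pz x : (d %| p * x)%N = (p ^ (m - 1) %| x)%N.
Proof. by rewrite d_split mulnC dvdn_pmul2l // p_gt0. Qed.

Lemma hhc0 (c : Z) : (hh * c == 0) = (p %| val c)%N.
Proof. by rewrite {1}[c]ZE /hh -natrM natZ0 dvd_hh. Qed.

Lemma pzc0 (c : Z) : (pz * c == 0) = (p ^ (m - 1) %| val c)%N.
Proof. by rewrite {1}[c]ZE /pz -natrM natZ0 dvd_pz. Qed.

Lemma unit_or_hh0 (c : Z) : c \is a GRing.unit \/ hh * c = 0.
Proof.
case pc: (p %| val c)%N; first by right; apply/eqP; rewrite hhc0.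
left; rewrite [c]ZE unitZpE ?d_gt1 // coprime_pexpl // prime_coprime //.
by rewrite pc.
Qed.

Lemma hh_div (c : Z) : c != 0 -> exists y, y * c = hh.
Proof.
move=> c0; set x := val c.
have x0 : (0 < x)%N.
  rewrite lt0n; apply: contra c0 => /eqP x0; rewrite [c]ZE -/x x0 //.
set e := logn p x.
have dx : (p ^ e %| x)%N by apply: pfactor_dvdnn.
set u := (x %/ p ^ e)%N.
have xu : x = (u * p ^ e)%N by rewrite divnK.
have pu : ~~ (p %| u)%N.
  apply/negP => /dvdnP [w uw].
  have : (p ^ e.+1 %| x)%N by rewrite xu uw expnS -mulnA mulnC dvdn_mull.
  by rewrite pfactor_dvdn // ltnn.
have em : (e <= m - 1)%N.
  have : (p ^ e < p ^ m)%N by apply: leq_ltn_trans (dvdn_leq x0 dx) (Zlt c).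
  rewrite ltn_exp2l ?p_gt1 //; lia.
have uU : (u%:R : Z) \is a GRing.unit.
  by rewrite unitZpE ?d_gt1 // coprime_pexpl // prime_coprime.
exists ((p ^ (m - 1 - e))%:R * (u%:R)^-1).
rewrite [c]ZE -/x xu natrM mulrA divrK // -natrM -expnD.
by rewrite subnK.
Qed.

Lemma pz0_hh (c : Z) : pz * c = 0 -> exists y, c = hh * y.
Proof.
move/eqP; rewrite pzc0 => /dvdnP [w cw].
by exists w%:R; rewrite [c]ZE cw natrM mulrC.
Qed.

Lemma hh0_pz (c : Z) : hh * c = 0 -> exists y, c = pz * y.
Proof.
move/eqP; rewrite hhc0 => /dvdnP [w cw].
by exists w%:R; rewrite [c]ZE cw natrM mulrC.
Qed.

Lemma card_pz0 : #|[set c : Z | pz * c == 0]| = p.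
Proof.
have -> : [set c : Z | pz * c == 0] = (fun i : 'I_p => hh * (i : nat)%:R) @: setT.
  apply/setP => c; rewrite inE; apply/idP/imsetP.
    move/eqP/pz0_hh => [y ->].
    exists (Ordinal (ltn_pmod (val y) p_gt0)) => //=.
    rewrite {1}[y]ZE {1}(divn_eq (val y) p) natrD natrM mulrDr.
    by rewrite -/pz mulrA mulrAC hhpz mul0r add0r.
  by move=> [i _ ->]; rewrite mulrA [pz * hh]mulrC hhpz mul0r.
rewrite card_imset ?cardsT ?card_ord //.
move=> i j /= /eqP; rewrite /hh -!natrM.
move/eqP/(congr1 val); rewrite /= !(val_Zp_nat d_gt1) !modn_small.
- by move/eqP; rewrite eqn_pmul2l ?expn_gt0 ?p_gt0 // => /eqP /val_inj.
- by rewrite d_split ltn_pmul2l ?expn_gt0 ?p_gt0.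
- by rewrite d_split ltn_pmul2l ?expn_gt0 ?p_gt0.
Qed.

Lemma d_aux K : d = (p * K)%N -> K = (p ^ (m - 1))%N.
Proof. by move=> E; apply/eqP; rewrite -(eqn_pmul2r p_gt0) -d_split E mulnC. Qed.

Lemma card_hh0 : #|[set c : Z | hh * c == 0]| = (p ^ (m - 1))%N.
Proof.
have := @master Z Z (fun c => pz * c) setT (fun x y => mulrBr _ _ _) (in_setT _)
  (fun _ _ _ _ => in_setT _).
have -> : [set x in [set: Z] | pz * x == 0] = [set c : Z | pz * c == 0].
  by apply/setP => x; rewrite !inE.
have -> : (fun c => pz * c) @: [set: Z] = [set c : Z | hh * c == 0].
  apply/setP => c; rewrite inE; apply/imsetP/idP.
    by move=> [y _ ->]; rewrite mulrA hhpz mul0r.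
  by move/eqP/hh0_pz => [y ->]; exists y.
rewrite cardsT cardZ card_pz0 => E.
by apply: d_aux.
Qed.


Lemma card_rowZ N : #|{: 'rV[Z]_N}| = (d ^ N)%N.
Proof. by rewrite card_mx mul1n cardZ. Qed.

Lemma scale0P N (c : Z) (v : 'rV[Z]_N) : (c *: v == 0) = [forall k, c * v 0 k == 0].
Proof.
apply/eqP/forallP => [H k | H].
  by have := congr1 (fun M : 'rV[Z]_N => M 0 k) H; rewrite !mxE => ->.
by apply/rowP => k; rewrite !mxE; apply/eqP.
Qed.

Lemma card_rowP N (P : {pred Z}) :
  #|[set v : 'rV[Z]_N | [forall k, v 0 k \in P]]| = (#|P| ^ N)%N.
Proof.
have inj : injective (fun v : 'rV[Z]_N => [ffun k => v 0 k]).
  by move=> u v /= /ffunP H; apply/rowP => k; have := H k; rewrite !ffunE.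
rewrite -(card_imset _ inj).
have -> : (fun v : 'rV[Z]_N => [ffun k => v 0 k]) @: [set v : 'rV[Z]_N | [forall k, v 0 k \in P]]
   = [set f : {ffun 'I_N -> Z} | f \in ffun_on P].
  apply/setP => f; rewrite inE; apply/imsetP/ffun_onP.
    by move=> [v]; rewrite inE => /forallP H -> k; rewrite ffunE.
  move=> H; exists (\row_k f k); last by apply/ffunP => k; rewrite !ffunE mxE.
  by rewrite inE; apply/forallP => k; rewrite mxE.
by rewrite cardsE card_ffun_on card_ord.
Qed.

Lemma card_hh0v N : #|[set v : 'rV[Z]_N | hh *: v == 0]| = ((p ^ (m - 1)) ^ N)%N.
Proof.
rewrite -card_hh0 -card_rowP; apply: eq_card => v; rewrite !inE scale0P.
by apply: eq_forallb => k; rewrite inE.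
Qed.

Lemma card_pz0v N : #|[set v : 'rV[Z]_N | pz *: v == 0]| = (p ^ N)%N.
Proof.
rewrite -[X in _ = (X ^ N)%N]card_pz0 -card_rowP; apply: eq_card => v; rewrite !inE scale0P.
by apply: eq_forallb => k; rewrite inE.
Qed.

Lemma hh0_pzv N (v : 'rV[Z]_N) : hh *: v = 0 -> exists u, v = pz *: u.
Proof.
move/eqP; rewrite scale0P => /forallP H.
have [y Hy] : exists y : 'I_N -> Z, forall k, v 0 k = pz * y k.
  by apply: (@fin_all_exists _ (fun=> Z) (fun k y => v 0 k = pz * y)) => k; apply: hh0_pz; apply/eqP.
by exists (\row_k y k); apply/rowP => k; rewrite !mxE Hy.
Qed.

Lemma pz0_hhv N (v : 'rV[Z]_N) : pz *: v = 0 -> exists u, v = hh *: u.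
Proof.
move/eqP; rewrite scale0P => /forallP H.
have [y Hy] : exists y : 'I_N -> Z, forall k, v 0 k = hh * y k.
  by apply: (@fin_all_exists _ (fun=> Z) (fun k y => v 0 k = hh * y)) => k; apply: pz0_hh; apply/eqP.
by exists (\row_k y k); apply/rowP => k; rewrite !mxE Hy.
Qed.

Definition indep i N (A : 'M[Z]_(i, N)) : bool := [forall x : 'rV[Z]_i, (x *m A == 0 :> 'rV[Z]_N) ==> (x == 0)].

Lemma indepP i N (A : 'M[Z]_(i, N)) : reflect (forall x : 'rV[Z]_i, x *m A = 0 -> x = 0) (indep A).
Proof.
apply: (iffP forallP) => [H x xA | H x]; first by apply/eqP; move/implyP: (H x); apply; apply/eqP.
by apply/implyP => /eqP /H ->.
Qed.

Lemma indep_col_mx i N (v : 'rV[Z]_N) (A : 'M[Z]_(i, N)) :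
  indep (col_mx v A : 'M_(1 + i, N)) -> indep A.
Proof.
move/indepP => H; apply/indepP => x xA.
have := H (row_mx 0 x); rewrite mul_row_col mul0mx add0r xA => /(_ erefl) /eqP.
by rewrite row_mx_eq0 => /andP [_ /eqP].
Qed.


Lemma lsubmxB a b c (x y : 'M[Z]_(a, b + c)) : lsubmx (x - y) = lsubmx x - lsubmx y.
Proof. by apply/matrixP => r s; rewrite !mxE. Qed.
Lemma rsubmxB a b c (x y : 'M[Z]_(a, b + c)) : rsubmx (x - y) = rsubmx x - rsubmx y.
Proof. by apply/matrixP => r s; rewrite !mxE. Qed.

Lemma hhM_neq0 : (hh%:M : 'M[Z]_1) != 0.
Proof.
apply: contra hh_neq0 => /eqP H; have := congr1 (fun M : 'M[Z]_1 => M 0 0) H.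
by rewrite !mxE eqxx mulr1n => ->.
Qed.

Lemma col_mul i N (x : 'rV[Z]_(1 + i)) (v : 'rV[Z]_N) (A : 'M[Z]_(i, N)) :
  x *m col_mx v A = lsubmx x 0 0 *: v + rsubmx x *m A.
Proof.
by rewrite -{1}(hsubmxK x) mul_row_col {1}(mx11_scalar (lsubmx x)) mul_scalar_mx.
Qed.

Lemma bad_char N i j (A : 'M[Z]_(i, N)) (G : 'M[Z]_(N, j)) (v : 'rV[Z]_N) :
  indep A -> A *m G = 0 -> v *m G = 0 -> ~~ indep (col_mx v A : 'M_(1 + i, N)) ->
  exists y u, [/\ u *m G = 0, hh *: u = 0 & v = y *m A + u].
Proof.
move=> iA AG vG; rewrite negb_forall => /existsP [x]; rewrite negb_imply => /andP [/eqP xv x0].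
move: xv; rewrite col_mul; set c := lsubmx x 0 0; set x' := rsubmx x => xv.
have c0 : c != 0.
  apply: contra x0 => /eqP c0.
  have x'0 : x' = 0 by apply: (elimT (indepP _) iA); rewrite -xv c0 scale0r add0r.
  rewrite -(hsubmxK x) -/x' x'0 (mx11_scalar (lsubmx x)) -/c c0.
  by apply/eqP/matrixP => a b; rewrite !mxE; case: split => ?; rewrite !mxE ?mul0rn.
have [y0 hy] := hh_div c0.
set w := - (y0 *: x').
have hv : hh *: v = w *m A.
  apply/eqP; rewrite /w mulNmx -scalemxAl -hy -scalerA -subr_eq0 opprK -scalerDr xv.
  by rewrite scaler0.
have pw : pz *: w = 0.
  apply: (elimT (indepP _) iA); rewrite -scalemxAl -hv scalerA mulrC hhpz scale0r //.
have [y wy] := pz0_hhv pw.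
exists y, (v - y *m A); split.
- by rewrite mulmxBl vG -mulmxA AG mulmx0 subrr.
- by rewrite scalerBr hv wy -scalemxAl subrr.
- by rewrite addrC subrK.
Qed.

Lemma step N i j (A : 'M[Z]_(i, N)) (G : 'M[Z]_(N, j)) :
  indep A -> A *m G = 0 -> (forall t : 'rV[Z]_j, exists v, v *m G = t) ->
  #|[set v : 'rV[Z]_N | (v *m G == 0) && indep (col_mx v A : 'M_(1 + i, N))]|
   = (p ^ (m * (N - j)) - p ^ ((m - 1) * (N - j) + i))%N.
Proof.
move=> iA AG sG.
set W := [set v : 'rV[Z]_N | v *m G == 0].
set P := [set v : 'rV[Z]_N | hh *: v == 0].
have E1 : (#|W| * d ^ j = d ^ N)%N.
  have := @master _ _ (fun v : 'rV[Z]_N => v *m G) setT (fun x y => mulmxBl x y G)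
     (in_setT _) (fun _ _ _ _ => in_setT _).
  rewrite cardsT card_rowZ => ->.
  have -> : [set x in [set: 'rV[Z]_N] | x *m G == 0] = W by apply/setP => x; rewrite !inE.
  have -> : (fun v => v *m G) @: [set: 'rV[Z]_N] = [set: 'rV[Z]_j].
    apply/setP => t; rewrite inE; apply/imsetP; have [v vt] := sG t; by exists v.
  by rewrite cardsT card_rowZ.
set U := [set u : 'rV[Z]_N | pz *: (u *m G) == 0].
have U0 : 0 \in U by rewrite inE mul0mx scaler0.
have UB : forall x y, x \in U -> y \in U -> x - y \in U.
  by move=> x y; rewrite !inE mulmxBl scalerBr => /eqP -> /eqP ->; rewrite subr0.
have E2a : #|U| = (#|W| * p ^ j)%N.
  rewrite (@master _ _ (fun v : 'rV[Z]_N => v *m G) U (fun x y => mulmxBl x y G) U0 UB).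
  congr (_ * _)%N.
    apply: eq_card => x; rewrite !inE; apply/andP/idP => [[]//|xG]; split => //.
    by rewrite (eqP xG) scaler0.
  rewrite -(card_pz0v j); apply: eq_card => t; rewrite !inE; apply/imsetP/idP.
    by move=> [u]; rewrite inE => ? ->.
  by move=> pt; have [v vt] := sG t; exists v => //; rewrite inE vt.
have E2b : #|U| = (p ^ N * #|W :&: P|)%N.
  rewrite (@master _ _ (fun v : 'rV[Z]_N => pz *: v) U (fun x y => scalerBr pz x y) U0 UB).
  congr (_ * _)%N.
    rewrite -(card_pz0v N); apply: eq_card => x; rewrite !inE.
    apply/andP/idP => [[]//|px]; split => //.
    by rewrite scalemxAl (eqP px) mul0mx.
  apply: eq_card => v; rewrite !inE; apply/imsetP/andP.
    move=> [u]; rewrite inE => pu ->; split; first by rewrite -scalemxAl.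
    by rewrite scalerA hhpz scale0r.
  move=> [vG /eqP hv]; have [u vu] := hh0_pzv hv; exists u => //.
  by rewrite inE scalemxAl -vu.
set bad := [set v : 'rV[Z]_N | (v *m G == 0) && ~~ indep (col_mx v A : 'M_(1 + i, N))].
set Phi := fun x : 'rV[Z]_(i + N) => lsubmx x *m A + rsubmx x.
set D2 := [set x : 'rV[Z]_(i + N) | rsubmx x \in W :&: P].
have PhiB : forall x y, Phi (x - y) = Phi x - Phi y.
  move=> x y; rewrite /Phi lsubmxB rsubmxB mulmxBl.
  by rewrite opprD addrACA.
have D20 : 0 \in D2.
  by rewrite !inE; apply/andP; split; apply/eqP; apply/rowP => k; rewrite !mxE ?mulr0 ?big1 // => l _; rewrite !mxE mul0r.
have D2B : forall x y, x \in D2 -> y \in D2 -> x - y \in D2.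
  move=> x y; rewrite !inE rsubmxB mulmxBl scalerBr.
  by move=> /andP [/eqP -> /eqP ->] /andP [/eqP -> /eqP ->]; rewrite !subr0 !eqxx.
have E3 := @master _ _ Phi D2 PhiB D20 D2B.
have cD2 : #|D2| = (d ^ i * #|W :&: P|)%N.
  have -> : D2 = (fun yu => row_mx yu.1 yu.2) @: setX [set: 'rV[Z]_i] (W :&: P).
    apply/setP => x; apply/idP/imsetP.
      move=> Dx; exists (lsubmx x, rsubmx x); last by rewrite hsubmxK.
      by apply/setXP; split; [exact: in_setT | rewrite inE in Dx].
    move=> [[y u]] /setXP [_ uWP] ->.
    by rewrite inE row_mxKr.
  rewrite card_imset; first by rewrite cardsX cardsT card_rowZ.
  move=> [y u] [y' u'] /= H.
  have := congr1 lsubmx H; have := congr1 rsubmx H; rewrite !row_mxKl !row_mxKr => -> ->. by [].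
have cK : #|[set x in D2 | Phi x == 0]| = ((p ^ (m - 1)) ^ i)%N.
  rewrite -(card_hh0v i).
  have -> : [set x in D2 | Phi x == 0] =
      (fun y => row_mx y (- (y *m A))) @: [set y : 'rV[Z]_i | hh *: y == 0].
    apply/setP => x; rewrite inE; apply/andP/imsetP.
      move=> [Dx /eqP Px]; exists (lsubmx x).
        move: Dx; rewrite !inE => /andP [_ /eqP hx].
        apply/eqP; apply: (elimT (indepP _) iA).
        move/eqP: Px; rewrite /Phi addr_eq0 => /eqP Px.
        by rewrite -scalemxAl Px scalerN hx oppr0.
      move/eqP: Px; rewrite /Phi addrC addr_eq0 => /eqP <-.
      by rewrite hsubmxK.
    move=> [y]; rewrite inE => /eqP hy ->; split.
      rewrite !inE row_mxKr mulNmx -mulmxA AG mulmx0 oppr0 eqxx /=.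
      by rewrite scalerN scalemxAl hy mul0mx oppr0.
    by rewrite /Phi row_mxKl row_mxKr subrr.
  rewrite card_imset //.
  by move=> y y' /= H; rewrite -(row_mxKl y (- (y *m A))) H row_mxKl.
have cB : Phi @: D2 = bad.
  apply/setP => v; rewrite inE; apply/imsetP/andP.
    move=> [x]; rewrite !inE => /andP [/eqP xG /eqP xP] ->.
    split.
      by rewrite /Phi mulmxDl -mulmxA AG mulmx0 add0r xG.
    apply/negP => /indepP H.
    have := H (row_mx (hh%:M) (- (hh *: lsubmx x))).
    rewrite mul_row_col mul_scalar_mx mulNmx -scalemxAl /Phi scalerDr xP addr0 subrr.
    move=> /(_ erefl) /eqP; rewrite row_mx_eq0 => /andP [h0 _].
    by move: hhM_neq0; rewrite h0.
  move=> [/eqP vG nI].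
  have [y [u [uG hu ->]]] := bad_char iA AG vG nI.
  exists (row_mx y u); last by rewrite /Phi row_mxKl row_mxKr.
  by rewrite inE row_mxKr !inE uG hu !eqxx.
rewrite cB cK cD2 in E3.
have E4 : (#|[set v : 'rV[Z]_N | (v *m G == 0%R) && indep (col_mx v A : 'M_(1 + i, N))]|
    + #|bad| = #|W|)%N.
  rewrite -(cardsID [set v : 'rV[Z]_N | indep (col_mx v A : 'M_(1 + i, N))] W).
  congr (_ + _)%N; apply: eq_card => v; rewrite !inE //.
  by rewrite andbC.
have w0 : (0 < #|W|)%N by apply/card_gt0P; exists 0; rewrite inE mul0mx.
exact: (step_arith p_gt1 m0 w0 E1 (etrans (esym E2a) E2b) E3 E4).
Qed.


Lemma surj_indep i N (A : 'M[Z]_(i, N)) : indep A ->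
  forall t : 'rV[Z]_i, exists v : 'rV[Z]_N, v *m A^T = t.
Proof.
elim: i A => [|i IH] A iA t.
  by exists 0; rewrite mul0mx; apply/rowP => [[]].
move: A iA t; rewrite -[i.+1]/(1 + i)%N => A iA t.
pose a : 'rV[Z]_N := usubmx (A : 'M_(1 + i, N)).
pose A' : 'M[Z]_(i, N) := dsubmx (A : 'M_(1 + i, N)).
have eA : A = col_mx a A' by rewrite vsubmxK.
have iA' : indep A' by rewrite eA in iA; apply: indep_col_mx iA.
have [z Hz] : exists z : 'I_i -> 'rV[Z]_N, forall l, z l *m A'^T = delta_mx 0 l.
  by apply: (@fin_all_exists _ (fun=> 'rV[Z]_N) (fun l z => z *m A'^T = delta_mx 0 l)) => l; apply: IH.
pose Zm : 'M[Z]_(i, N) := \matrix_l z l.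
have HZ : Zm *m A'^T = 1%:M.
  by apply/row_matrixP => l; rewrite row_mul rowK Hz row1.
pose y := a *m Zm^T.
pose w := a - y *m A'.
have [k wk] : exists k, w 0 k \is a GRing.unit.
  case: (boolP [exists k, w 0 k \is a GRing.unit]) => [/existsP //|].
  rewrite negb_exists => /forallP H.
  have hw : hh *: w = 0.
    apply/eqP; rewrite scale0P; apply/forallP => k.
    by case: (unit_or_hh0 (w 0 k)) => [U|->]; [move: (H k); rewrite U | ].
  move/indepP: iA => /(_ (row_mx hh%:M (- (hh *: y)))).
  rewrite eA (col_mul (row_mx hh%:M (- (hh *: y))) a A') row_mxKl row_mxKr.
  rewrite mxE eqxx mulr1n mulNmx -scalemxAl -scalerBr -/w hw.
  move=> /(_ erefl) H0.
  have := congr1 (fun x : 'rV[Z]_(1 + i) => x 0 (lshift i 0)) H0.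
  rewrite /= row_mxEl !mxE eqxx mulr1n => h0.
  by move: hh_neq0; rewrite h0 eqxx.
pose ek : 'rV[Z]_N := delta_mx 0 k.
pose u0 := ek - (ek *m A'^T) *m Zm.
have u0A' : u0 *m A'^T = 0 by rewrite mulmxBl -[(_ *m Zm) *m _]mulmxA HZ mulmx1 subrr.
have u0a : u0 *m a^T = (w 0 k)%:M.
  have -> : u0 *m a^T = ek *m w^T.
    rewrite /w /y linearB /= trmx_mul trmx_mul trmxK mulmxBr /u0 mulmxBl.
    by rewrite !mulmxA.
  rewrite -rowE; apply/matrixP => r s; rewrite !mxE.
  by rewrite (ord1 r) (ord1 s) /= mulr1n.
pose u := (w 0 k)^-1 *: u0.
have uA' : u *m A'^T = 0 by rewrite -scalemxAl u0A' scaler0.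
have ua : u *m a^T = 1%:M by rewrite -scalemxAl u0a scale_scalar_mx mulVr.
pose t1 : 'rV[Z]_1 := lsubmx (t : 'rV_(1 + i)).
pose t2 : 'rV[Z]_i := rsubmx (t : 'rV_(1 + i)).
have [v' Hv'] := IH A' iA' t2.
exists (v' + ((t1 - v' *m a^T) 0 0) *: u).
rewrite eA tr_col_mx mul_mx_row !mulmxDl -!(scalemxAl _ u) uA' ua Hv' scaler0 addr0.
rewrite scale_scalar_mx mulr1 -(mx11_scalar (t1 - v' *m a^T)) addrC subrK.
by rewrite hsubmxK.
Qed.


Lemma card_sum (T : finType) (Q : pred T) :
  #|[set x | Q x]| = (\sum_x (if Q x then 1 else 0))%N.
Proof. by rewrite -sum1dep_card big_mkcond. Qed.

Lemma card_col_rec i N (P : pred 'M[Z]_(1 + i, N)) :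
  #|[set A : 'M[Z]_(1 + i, N) | P A]| =
  (\sum_(B : 'M[Z]_(i, N)) #|[set v : 'rV[Z]_N | P (col_mx v B)]|)%N.
Proof.
rewrite -sum1dep_card (reindex (fun q : 'M[Z]_(i, N) * 'rV[Z]_N => col_mx q.2 q.1)) /=; last first.
  exists (fun A : 'M[Z]_(1 + i, N) => (dsubmx A, usubmx A)) => [[B v]|A] _ /=.
    by rewrite col_mxKd col_mxKu.
  by rewrite vsubmxK.
rewrite [RHS](eq_bigr (fun B => \sum_v (if P (col_mx v B) then 1 else 0))%N); last first.
  by move=> B _; rewrite card_sum.
rewrite pair_big /= big_mkcond /=.
by apply: eq_bigr => [[B v]].
Qed.


Lemma card_GL i N :
  #|[set A : 'M[Z]_(i, N) | indep A]| = (\prod_(l < i) (p ^ (m * N) - p ^ ((m - 1) * N + l)))%N.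
Proof.
elim: i => [|i IH].
  rewrite big_ord0 -[RHS](card_mx Z 0 N); apply: eq_card => A; rewrite !inE.
  by apply/indepP => x _; apply/rowP => [[]].
rewrite big_ord_recr /= -IH -[i.+1]/(1 + i)%N card_col_rec.
rewrite (eq_bigr (fun B : 'M[Z]_(i, N) =>
   if indep B then (p ^ (m * N) - p ^ ((m - 1) * N + i))%N else 0%N)); last first.
  move=> B _; case: ifP => iB.
    rewrite -[in RHS](subn0 N) -(step (G := 0 : 'M[Z]_(N, 0)) iB (mulmx0 _ _)).
      by apply: eq_card => v; rewrite !inE mulmx0 eqxx.
    by move=> t; exists 0; apply/rowP => [[]].
  apply/eqP; rewrite cards_eq0; apply/eqP/setP => v; rewrite !inE.
  by apply/negP => /indep_col_mx; rewrite iB.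
rewrite -big_mkcond /= sum_nat_const; congr (_ * _)%N.
by apply: eq_card => B; rewrite !inE.
Qed.

Variable n : nat.

Definition Om : 'M[Z]_(n + n) := block_mx 0 1%:M (- 1%:M) 0.

Lemma OmE (a b : 'rV[Z]_(n + n)) :
  a *m Om *m b^T = lsubmx a *m (rsubmx b)^T - rsubmx a *m (lsubmx b)^T.
Proof.
rewrite -{1}(hsubmxK a) -{1}(hsubmxK b) /Om mul_row_block tr_row_mx mul_row_col.
by rewrite ?mulmx0 ?mul0mx ?add0r ?addr0 mulmx1 mulmxN mulmx1 mulNmx addrC.
Qed.

Lemma OmT : Om^T = - Om.
Proof.
by rewrite /Om tr_block_mx opp_block_mx !trmx0 !oppr0 tr_scalar_mx linearN /= tr_scalar_mx opprK.
Qed.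

Lemma OmOm : Om *m Om = - 1%:M.
Proof.
rewrite /Om mulmx_block ?mulmx0 ?mul0mx ?add0r ?addr0 mul1mx mulmx1.
by rewrite [in RHS](scalar_mx_block n n (1 : Z)) opp_block_mx oppr0.
Qed.

Lemma tr11 (X : 'M[Z]_1) : X^T = X.
Proof. by apply/matrixP => a b; rewrite (ord1 a) (ord1 b) mxE. Qed.

Lemma Om_self (v : 'rV[Z]_(n + n)) : v *m Om *m v^T = 0.
Proof.
rewrite OmE -[X in _ - X]tr11 trmx_mul trmxK subrr //.
Qed.

Definition iso i (A : 'M[Z]_(i, n + n)) : bool := A *m Om *m A^T == 0.

Lemma iso_col i (v : 'rV[Z]_(n + n)) (B : 'M[Z]_(i, n + n)) :
  iso (col_mx v B : 'M_(1 + i, n + n)) = (v *m (Om *m B^T) == 0) && iso B.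
Proof.
rewrite /iso mul_col_mx tr_col_mx mul_col_row block_mx_eq0 Om_self eqxx /=.
have -> : B *m Om *m v^T = - (v *m Om *m B^T)^T.
  by rewrite !trmx_mul trmxK OmT mulNmx mulmxN opprK mulmxA.
by rewrite oppr_eq0 trmx_eq0 andbA andbb mulmxA.
Qed.

Lemma card_Tup i :
  #|[set A : 'M[Z]_(i, n + n) | indep A && iso A]| =
  (\prod_(l < i) (p ^ (m * (n + n - l)) - p ^ ((m - 1) * (n + n - l) + l)))%N.
Proof.
elim: i => [|i IH].
  rewrite big_ord0 -[RHS](card_mx Z 0 (n + n)); apply: eq_card => A; rewrite !inE.
  apply/andP; split; first by apply/indepP => x _; apply/rowP => [[]].
  by apply/eqP/matrixP => [[]].
rewrite big_ord_recr /= -IH -[i.+1]/(1 + i)%N card_col_rec.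
rewrite (eq_bigr (fun B : 'M[Z]_(i, n + n) =>
   if indep B && iso B then (p ^ (m * (n + n - i)) - p ^ ((m - 1) * (n + n - i) + i))%N
   else 0%N)); last first.
  move=> B _; case: ifP => /andP.
    move=> [iB isB].
    rewrite -(step (G := Om *m B^T) iB).
    - by apply: eq_card => v; rewrite !inE iso_col isB andbT andbC.
    - by rewrite mulmxA; apply/eqP.
    move=> t; have [w wt] := surj_indep iB t; exists (- (w *m Om)).
    by rewrite mulNmx mulmxA -(mulmxA w) OmOm mulmxN mulmx1 mulNmx opprK.
  move=> nB; apply/eqP; rewrite cards_eq0; apply/eqP/setP => v; rewrite !inE.
  apply/negP => /andP [/indep_col_mx iB]; rewrite iso_col => /andP [_ isB].
  by apply: nB.
rewrite -big_mkcond /= sum_nat_const; congr (_ * _)%N.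
by apply: eq_card => B; rewrite !inE.
Qed.


Definition mspan r (A : 'M[Z]_(r, n + n)) : {set 'rV[Z]_(n + n)} :=
  [set x *m A | x in [set: 'rV[Z]_r]].
Definition Tm r := [set A : 'M[Z]_(r, n + n) | indep A && iso A].

Lemma mulmx_inj r N (A : 'M[Z]_(r, N)) : indep A -> injective (fun x : 'rV[Z]_r => x *m A).
Proof.
move=> iA x y /= H; apply/eqP; rewrite -subr_eq0; apply/eqP; apply: (elimT (indepP _) iA).
by rewrite mulmxBl H subrr.
Qed.

Lemma card_mspan r (A : 'M[Z]_(r, n + n)) : indep A -> #|mspan A| = (d ^ r)%N.
Proof. by move=> iA; rewrite card_imset ?cardsT ?card_rowZ //; apply: mulmx_inj. Qed.

Lemma fiber r (A0 : 'M[Z]_(r, n + n)) : A0 \in Tm r ->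
  #|[set A in Tm r | mspan A == mspan A0]| = #|[set X : 'M[Z]_(r, r) | indep X]|.
Proof.
rewrite inE => /andP [iA0 isA0].
have inj : injective (fun X : 'M[Z]_(r, r) => X *m A0).
  move=> X Y /= H; apply/row_matrixP => l; apply: (mulmx_inj iA0) => /=.
  by rewrite -!row_mul H.
rewrite -(card_imset _ inj); apply: eq_card => A; rewrite !inE.
apply/andP/imsetP.
  move=> [/andP [iA isA] /eqP sA].
  have [x Hx] : exists x : 'I_r -> 'rV[Z]_r, forall l, row l A = x l *m A0.
    apply: (@fin_all_exists _ (fun=> 'rV[Z]_r) (fun l x => row l A = x *m A0)) => l.
    have : row l A \in mspan A by rewrite rowE; apply: imset_f; rewrite in_setT.
    by rewrite sA => /imsetP [x _ ->]; exists x.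
  have eA : A = (\matrix_l x l) *m A0.
    by apply/row_matrixP => l; rewrite row_mul rowK Hx.
  exists (\matrix_l x l) => //; rewrite inE; apply/indepP => y yX.
  by apply: (elimT (indepP _) iA); rewrite eA mulmxA yX mul0mx.
move=> [X]; rewrite inE => iX ->.
have iXA : indep (X *m A0).
  apply/indepP => y; rewrite mulmxA => /(elimT (indepP _) iA0).
  exact: (elimT (indepP _) iX).
split; first rewrite iXA /=.
  rewrite /iso trmx_mul !mulmxA -(mulmxA X A0 Om) -(mulmxA X) -(mulmxA X).
  by rewrite (eqP isA0) mul0mx mulmx0.
rewrite eqEcard !card_mspan // leqnn andbT.
apply/subsetP => v /imsetP [y _ ->]; rewrite mulmxA; apply: imset_f; exact: in_setT.
Qed.

Lemma card_Tm_codes r :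
  #|Tm r| = (#|(@mspan r) @: Tm r| * #|[set X : 'M[Z]_(r, r) | indep X]|)%N.
Proof.
rewrite -sum1_card (partition_big_imset (@mspan r)) /= -sum_nat_const.
apply: eq_bigr => C /imsetP [A0 TA0 ->].
by rewrite sum1dep_card -(fiber TA0).
Qed.


Lemma entryT a b c (X : 'M[Z]_(a, c)) (Y : 'M[Z]_(b, c)) i j :
  (X *m Y^T) i j = (row i X *m (row j Y)^T) 0 0.
Proof. by rewrite !mxE; apply: eq_bigr => l _; rewrite !mxE. Qed.

Lemma sympE (a b : 'rV[Z]_(n + n)) : symp a b = (a *m Om *m b^T) 0 0.
Proof. by rewrite OmE. Qed.

Variable k : nat.

Definition Mof (a : {ffun 'I_(n - k) -> pvec (p ^ m) n}) : 'M[Z]_(n - k, n + n) :=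
  \matrix_j (a j).

Lemma rowMof (a : {ffun 'I_(n - k) -> pvec (p ^ m) n}) j : row j (Mof a) = a j.
Proof. by rewrite rowK. Qed.

Lemma sum_Mof (a : {ffun 'I_(n - k) -> pvec (p ^ m) n}) (x : {ffun 'I_(n - k) -> Z}) :
  \sum_(j < n - k) x j *: a j = (\row_j x j) *m Mof a.
Proof. by rewrite mulmx_sum_row; apply: eq_bigr => j _; rewrite mxE rowK. Qed.

Lemma lin_indep_Mof (a : {ffun 'I_(n - k) -> pvec (p ^ m) n}) : lin_indep a = indep (Mof a).
Proof.
apply/forallP/indepP.
  move=> H y yM; have := H [ffun j => y 0 j]; rewrite sum_Mof.
  have -> : \row_j [ffun j => y 0 j] j = y by apply/rowP => j; rewrite mxE ffunE.
  rewrite yM eqxx /= => /forallP H'; apply/rowP => j; move: (H' j).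
  by rewrite ffunE mxE => /eqP.
move=> H x; apply/implyP; rewrite sum_Mof => /eqP /H yx; apply/forallP => j.
by have := congr1 (fun M : 'rV[Z]_(n - k) => M 0 j) yx; rewrite !mxE => ->.
Qed.

Lemma pso_Mof (a : {ffun 'I_(n - k) -> pvec (p ^ m) n}) : pairwise_symp_orth a = iso (Mof a).
Proof.
apply/forallP/eqP => [H | H].
  apply/matrixP => i j; rewrite entryT row_mul !rowMof -sympE [RHS]mxE.
  by move/forallP: (H i) => /(_ j) /eqP.
move=> i; apply/forallP => j; have := congr1 (fun M : 'M[Z]_(n - k) => M i j) H.
by rewrite entryT row_mul !rowMof -sympE [in RHS]mxE => ->.
Qed.

Lemma zspan_Mof (a : {ffun 'I_(n - k) -> pvec (p ^ m) n}) : zspan a = mspan (Mof a).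
Proof.
apply/setP => v; rewrite inE; apply/existsP/imsetP.
  by move=> [x /eqP ->]; exists (\row_j x j); rewrite ?in_setT ?sum_Mof.
move=> [y _ ->]; exists [ffun j => y 0 j]; rewrite sum_Mof.
by apply/eqP; congr (_ *m _); apply/rowP => j; rewrite mxE ffunE.
Qed.

Lemma codes_eq : stab_codes (p ^ m) n k = (@mspan (n - k)) @: Tm (n - k).
Proof.
apply/setP => C; rewrite inE; apply/existsP/imsetP.
  move=> [a /and3P [li ps /eqP ->]]; exists (Mof a); last exact: zspan_Mof.
  by rewrite inE -lin_indep_Mof -pso_Mof li ps.
move=> [A TA ->]; exists [ffun j => row j A].
have MA : Mof [ffun j => row j A] = A by apply/row_matrixP => j; rewrite rowMof ffunE.
rewrite lin_indep_Mof pso_Mof zspan_Mof MA; rewrite inE in TA.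
by case/andP: TA => -> ->; rewrite eqxx.
Qed.


Lemma count_main :
  (#|stab_codes (p ^ m) n k| * \prod_(l < n - k) (p ^ (m * (n - k)) - p ^ ((m - 1) * (n - k) + l))
   = \prod_(l < n - k) (p ^ (m * (n + n - l)) - p ^ ((m - 1) * (n + n - l) + l)))%N.
Proof.
by rewrite codes_eq -card_GL -card_Tup -[X in _ = X]/(#|Tm (n - k)|) card_Tm_codes.
Qed.

End Zd.

Lemma sum_arith s r : (r <= s.+1)%N ->
  ((\sum_(j < r) (s - j)) * 2 = r * (2 * s + 1 - r))%N.
Proof.
elim: r => [|r IH] rs; first by rewrite big_ord0.
rewrite big_ord_recr /= mulnDl IH; last by apply: ltnW.
nia.
Qed.

Lemma powsub p e f : (p ^ (e + f) - p ^ e = p ^ e * (p ^ f - 1))%N.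
Proof. by rewrite expnD mulnBr muln1. Qed.

Lemma sq1 x : (x * x - 1 = (x - 1) * (x + 1))%N.
Proof. nia. Qed.


Lemma term_eq p m n k (j : nat) : prime p -> (0 < m)%N -> (k < n)%N -> (j < n - k)%N ->
  ((p ^ (m - 1))%:R : rat) ^+ (n + k - j) * ((p ^ (n - j) - 1)%:R / (p ^ (n - k - j) - 1)%:R)
   * (p ^ (n - j) + 1)%:R * (p ^ (m * (n - k)) - p ^ ((m - 1) * (n - k) + j))%:R
  = (p ^ (m * (n + n - j)) - p ^ ((m - 1) * (n + n - j) + j))%:R.
Proof.
move=> pP m0 kn jr.
have p1 := prime_gt1 pP.
have eB : (m * (n - k) = ((m - 1) * (n - k) + j) + (n - k - j))%N.
  by case: m m0 => // m' _; rewrite subn1 /=; nia.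
have eT : (m * (n + n - j) = ((m - 1) * (n + n - j) + j) + (n - j + (n - j)))%N.
  by clear eB; case: m m0 => // m' _; rewrite subn1 /=; nia.
have eE : ((m - 1) * (n + n - j) + j = (m - 1) * (n + k - j) + ((m - 1) * (n - k) + j))%N.
  by nia.
rewrite eB powsub eT powsub (expnD p (n - j) (n - j)) sq1 eE (expnD p ((m - 1) * (n + k - j))) !natrM -natrX -expnM.
have C0 : ((p ^ (n - k - j) - 1)%:R : rat) != 0.
  rewrite pnatr_eq0 subn_eq0 -ltnNge.
  by have := ltn_exp2l 0 (n - k - j) p1; rewrite expn0 => ->; lia.
by field.
Qed.

Theorem lemma2 (p m n k : nat) :
  prime p -> (1 <= m)%N -> (1 <= n)%N -> (k < n)%N ->
  (#|stab_codes (p ^ m) n k|)%:R =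
    ((p ^ (m - 1))%:R : rat) ^+ (((n - k) * (n + 3 * k + 1)) %/ 2)
    * (\prod_(j < n - k) ((p ^ (n - j) - 1)%:R / (p ^ (n - k - j) - 1)%:R))
    * (\prod_(j < n - k) (p ^ (n - j) + 1)%:R).
Proof.
move=> pP m0 n0 kn.
have H := count_main pP m0 n k.
have p1 := prime_gt1 pP.
have B0 : ((\prod_(l < n - k) (p ^ (m * (n - k)) - p ^ ((m - 1) * (n - k) + l)))%:R : rat) != 0.
  rewrite pnatr_eq0 -lt0n prodn_gt0 // => l; rewrite subn_gt0 ltn_exp2l //.
  have := ltn_ord l; case: m m0 {H} => // m' _; rewrite subn1 /=; nia.
have E : (((n - k) * (n + 3 * k + 1)) %/ 2 = \sum_(j < n - k) (n + k - j))%N.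
  have := @sum_arith (n + k) (n - k); rewrite -/(nat_of_ord _) => S.
  rewrite (_ : ((n - k) * (n + 3 * k + 1)) = (\sum_(j < n - k) (n + k - j)) * 2)%N ?mulnK //.
  rewrite S; last by lia.
  congr (_ * _)%N; lia.
apply: (mulIf B0); rewrite -natrM H !natr_prod E -prodrXr -!big_split /=.
apply: eq_bigr => j _; rewrite term_eq //.
Qed.
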